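(* Let $\mathcal{K}=\langle\mathcal{O},\mathcal{P}\rangle$ be a DL-safe hybrid knowledge base whose rules contain no function symbols, and let $\mathrm{lfp}(\mathrm{IFP}_{\mathcal{K}})=\langle I_T,I_F\rangle$ be its iterated fixpoint semantics. Then $\langle I_T,\ \mathrm{KA}(\mathcal{K})\setminus I_F\rangle$ is the alternating fixpoint partition $(P_\omega,N_\omega)$ of $\mathcal{K}$.
   Context: A hybrid knowledge base is a pair $\mathcal{K}=\langle\mathcal{O},\mathcal{P}\rangle$ where $\mathcal{O}$ is a set of description logic axioms (e.g. $\mathcal{ALC}$) and $\mathcal{P}$ is a finite set of normal rules $h\leftarrow a_1,\dots,a_n,\mathit{not}\,b_1,\dots,\mathit{not}\,b_r$. An atom in $\mathcal{P}$ is a DL-atom if its predicate occurs in $\mathcal{O}$; a rule is DL-safe if each of its variables occurs in some positive non-DL-atom of its body; $\mathcal{K}$ is DL-safe if all rules are. The grounding of $\mathcal{P}$ replaces variables by ground terms of $\mathcal{K}$ in all possible ways (here only constants, so it is finite). $\mathrm{KA}(\mathcal{K})$ is the set of ground atoms occurring in the grounding of $\mathcal{P}$. $\pi(\mathcal{O})$ is the standard first-order translation of the DL axioms and $O_{\mathcal{K},S}=\{\pi(\mathcal{O})\}\cup S$ for $S\subseteq\mathrm{KA}(\mathcal{K})$; $\models$ is first-order entailment. Iterated fixpoint semantics: a 3-valued interpretation is a pair $\langle I_T,I_F\rangle$ of disjoint subsets of $\mathrm{KA}(\mathcal{K})$ ($a$ true if $a\in I_T$, false if $a\in I_F$), ordered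 by $\langle I_T,I_F\rangle\le\langle I_T',I_F'\rangle$ iff $I_T\subseteq I_T'$ and $I_F\subseteq I_F'$. For $\mathcal{I}=\langle I_T,I_F\rangle$: $T^{\mathcal{K}}_{\mathcal{I}}(Tr)=\{a\in\mathrm{KA}(\mathcal{K})\mid$ some clause $a\leftarrow a_1,\dots,a_n,\mathit{not}\,b_1,\dots,\mathit{not}\,b_r$ of the grounding of $\mathcal{P}$ has each $a_i$ true in $\mathcal{I}$ or in $Tr$ and each $b_j$ false in $\mathcal{I}\}\cup\{a\in\mathrm{KA}(\mathcal{K})\mid O_{\mathcal{K},I_T\cup Tr}\models a\}$; $F^{\mathcal{K}}_{\mathcal{I}}(Fa)=\{a\in\mathrm{KA}(\mathcal{K})\mid O_{\mathcal{K},I_T}\models\neg a$, or for every clause $a\leftarrow a_1,\dots,a_n,\mathit{not}\,b_1,\dots,\mathit{not}\,b_r$ of the grounding of $\mathcal{P}$ some $a_i$ is false in $\mathcal{I}$ or in $Fa$, or some $b_j$ is true in $\mathcal{I}\}\cap\{a\in\mathrm{KA}(\mathcal{K})\mid O_{\mathcal{K},\mathrm{KA}(\mathcal{K})\setminus(I_F\cup Fa)}\not\models a\}$. These are monotonic; $\mathrm{IFP}_{\mathcal{K}}(\mathcal{I})=\langle\mathrm{lfp}(T^{\mathcal{K}}_{\mathcal{I}}),\mathrm{gfp}(F^{\mathcal{K}}_{\mathcal{I}})\rangle$ is monotonic w.r.t. $\le$, and the iterated fixpoint semantics is its least fixpoint $\mathrm{lfp}(\mathrm{IFP}_{\mathcal{K}})$.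 Alternating fixpoint partition (for the ground $\mathcal{K}$): for a positive (negation-free) ground $\mathcal{K}'=\langle\mathcal{O},\mathcal{P}'\rangle$ and $S\subseteq\mathrm{KA}(\mathcal{K})$, $R_{\mathcal{K}'}(S)$ is the set of heads of rules of $\mathcal{P}'$ whose body atoms all lie in $S$, $D_{\mathcal{K}'}(S)=\{a\in\mathrm{KA}(\mathcal{K})\mid O_{\mathcal{K},S}\models a\}$, and $T_{\mathcal{K}'}(S)=R_{\mathcal{K}'}(S)\cup D_{\mathcal{K}'}(S)$ (monotonic). For $S\subseteq\mathrm{KA}(\mathcal{K})$: $\mathcal{K}/S=\langle\mathcal{O},\mathcal{P}/S\rangle$ where $\mathcal{P}/S$ contains $h\leftarrow a_1,\dots,a_n$ for each ground rule $h\leftarrow a_1,\dots,a_n,\mathit{not}\,b_1,\dots,\mathit{not}\,b_r$ with $\{b_1,\dots,b_r\}\cap S=\emptyset$; $\mathcal{K}//S=\langle\mathcal{O},\mathcal{P}//S\rangle$ where $\mathcal{P}//S$ contains $h\leftarrow a_1,\dots,a_n$ for each such ground rule with $\{b_1,\dots,b_r\}\cap S=\emptyset$ and $O_{\mathcal{K},S}\not\models\neg h$. Let $\Gamma_{\mathcal{K}}(S)=\mathrm{lfp}(T_{\mathcal{K}/S})$ and $\Gamma'_{\mathcal{K}}(S)=\mathrm{lfp}(T_{\mathcal{K}//S})$. Define $P_0=\emptyset$, $N_0=\mathrm{KA}(\mathcal{K})$, $P_{n+1}=\Gamma_{\mathcal{K}}(N_n)$, $N_{n+1}=\Gamma'_{\mathcal{K}}(P_n)$,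 $P_\omega=\bigcup_i P_i$, $N_\omega=\bigcap_i N_i$. The pair $(P_\omega,N_\omega)$ is the alternating fixpoint partition of $\mathcal{K}$. *)

(* Defs.v *)
From Stdlib Require Import List.
Import ListNotations.

Section HybridKB.
Context {V C P : Type}.
(* V : variables, C : constants, P : predicate symbols (concept names and
   role names of O are predicate symbols as well). *)

Inductive term := TVar (x : V) | TCst (c : C).
Record atom := mkAtom { apred : P; aargs : list term }.
Record rule := mkRule { rhead : atom; rpos : list atom; rneg : list atom }.

Inductive concept :=
| CTop | CBot | CName (A : P) | CNot (c : concept)
| CAnd (c d : concept) | COr (c d : concept)
| CEx (r : P) (c : concept) | CAll (r : P) (c : concept).

Inductive axiom :=
| AIncl (c d : concept)
| ACAss (c : concept) (a : C)
| ARAss (r : P) (a b : C).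

Record kb := mkKB { kb_onto : list axiom; kb_rules : list rule }.

Record gatom := mkG { gpred : P; gargs : list C }.
Record grule := mkGR { ghead : gatom; gpos : list gatom; gneg : list gatom }.

Definition aset := gatom -> Prop.

Fixpoint concept_preds (c : concept) : list P :=
  match c with
  | CTop | CBot => []
  | CName A => [A]
  | CNot c => concept_preds c
  | CAnd c d | COr c d => concept_preds c ++ concept_preds d
  | CEx r c | CAll r c => r :: concept_preds c
  end.

Definition axiom_preds (ax : axiom) : list P :=
  match ax with
  | AIncl c d => concept_preds c ++ concept_preds d
  | ACAss c _ => concept_preds c
  | ARAss r _ _ => [r]
  end.

Definition dl_pred (K : kb) (p : P) : Prop :=
  exists ax, In ax (kb_onto K) /\ In p (axiom_preds ax).

Definition dl_atom (K : kb) (a : atom) : Prop := dl_pred K (apred a).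

Definition rule_atoms (r : rule) : list atom := rhead r :: rpos r ++ rneg r.

Definition var_in_atom (x : V) (a : atom) : Prop := In (TVar x) (aargs a).

Definition var_in_rule (x : V) (r : rule) : Prop :=
  exists a, In a (rule_atoms r) /\ var_in_atom x a.

Definition dl_safe_rule (K : kb) (r : rule) : Prop :=
  forall x, var_in_rule x r ->
    exists a, In a (rpos r) /\ ~ dl_atom K a /\ var_in_atom x a.

Definition dl_safe (K : kb) : Prop :=
  forall r, In r (kb_rules K) -> dl_safe_rule K r.

Definition term_consts (t : term) : list C :=
  match t with TVar _ => [] | TCst c => [c] end.
Definition atom_consts (a : atom) : list C := flat_map term_consts (aargs a).
Definition rule_consts (r : rule) : list C := flat_map atom_consts (rule_atoms r).
Definition axiom_consts (ax : axiom) : list C :=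
  match ax with AIncl _ _ => [] | ACAss _ a => [a] | ARAss _ a b => [a; b] end.
Definition kb_consts (K : kb) : list C :=
  flat_map axiom_consts (kb_onto K) ++ flat_map rule_consts (kb_rules K).

Definition ground_term (th : V -> C) (t : term) : C :=
  match t with TVar x => th x | TCst c => c end.
Definition ground_atom (th : V -> C) (a : atom) : gatom :=
  mkG (apred a) (map (ground_term th) (aargs a)).
Definition ground_rule (th : V -> C) (r : rule) : grule :=
  mkGR (ground_atom th (rhead r)) (map (ground_atom th) (rpos r))
       (map (ground_atom th) (rneg r)).

Definition is_ground_rule (K : kb) (g : grule) : Prop :=
  exists r th, In r (kb_rules K) /\
    (forall x, var_in_rule x r -> In (th x) (kb_consts K)) /\
    g = ground_rule th r.

Definition KA (K : kb) : aset := fun a =>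
  exists g, is_ground_rule K g /\ In a (ghead g :: gpos g ++ gneg g).

(* ---------- first-order semantics (= semantics of pi(O)) ---------- *)
Record interp := mkInterp {
  dom : Type;
  dom_inh : inhabited dom;
  ic : C -> dom;
  ip : P -> list dom -> Prop }.

Fixpoint cext (I : interp) (c : concept) : dom I -> Prop :=
  match c with
  | CTop => fun _ => True
  | CBot => fun _ => False
  | CName A => fun x => ip I A [x]
  | CNot c => fun x => ~ cext I c x
  | CAnd c d => fun x => cext I c x /\ cext I d x
  | COr c d => fun x => cext I c x \/ cext I d x
  | CEx r c => fun x => exists y, ip I r [x; y] /\ cext I c y
  | CAll r c => fun x => forall y, ip I r [x; y] -> cext I c y
  end.

Definition sat_axiom (I : interp) (ax : axiom) : Prop :=
  match ax with
  | AIncl c d => forall x, cext I c x -> cext I d x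
  | ACAss c a => cext I c (ic I a)
  | ARAss r a b => ip I r [ic I a; ic I b]
  end.

Definition sat_gatom (I : interp) (a : gatom) : Prop :=
  ip I (gpred a) (map (ic I) (gargs a)).

Definition model_of (K : kb) (S : aset) (I : interp) : Prop :=
  (forall ax, In ax (kb_onto K) -> sat_axiom I ax) /\
  (forall b, S b -> sat_gatom I b).

Definition entails (K : kb) (S : aset) (a : gatom) : Prop :=
  forall I, model_of K S I -> sat_gatom I a.
Definition entails_neg (K : kb) (S : aset) (a : gatom) : Prop :=
  forall I, model_of K S I -> ~ sat_gatom I a.

Definition subset (X Y : aset) : Prop := forall a, X a -> Y a.
Definition same_set (X Y : aset) : Prop := forall a, X a <-> Y a.

Definition lfp_in (U : aset) (f : aset -> aset) : aset := fun a =>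
  U a /\ forall X, subset X U -> subset (f X) X -> X a.
Definition gfp_in (U : aset) (f : aset -> aset) : aset := fun a =>
  exists X, subset X U /\ subset X (f X) /\ X a.

Definition TI (K : kb) (IT IF : aset) (Tr : aset) : aset := fun a =>
  KA K a /\
  ((exists g, is_ground_rule K g /\ ghead g = a /\
      (forall b, In b (gpos g) -> IT b \/ Tr b) /\
      (forall b, In b (gneg g) -> IF b))
   \/ entails K (fun b => IT b \/ Tr b) a).

Definition FI (K : kb) (IT IF : aset) (Fa : aset) : aset := fun a =>
  KA K a /\
  (entails_neg K IT a \/
   (forall g, is_ground_rule K g -> ghead g = a ->
      (exists b, In b (gpos g) /\ (IF b \/ Fa b)) \/
      (exists b, In b (gneg g) /\ IT b))) /\
  ~ entails K (fun b => KA K b /\ ~ (IF b \/ Fa b)) a.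

Definition IFP (K : kb) (IT IF : aset) : aset * aset :=
  (lfp_in (KA K) (TI K IT IF), gfp_in (KA K) (FI K IT IF)).

Definition is_3interp (K : kb) (IT IF : aset) : Prop :=
  subset IT (KA K) /\ subset IF (KA K) /\ (forall a, ~ (IT a /\ IF a)).

Definition IFP_fixpoint (K : kb) (IT IF : aset) : Prop :=
  same_set (fst (IFP K IT IF)) IT /\ same_set (snd (IFP K IT IF)) IF.

Definition is_lfp_IFP (K : kb) (IT IF : aset) : Prop :=
  is_3interp K IT IF /\ IFP_fixpoint K IT IF /\
  (forall JT JF, is_3interp K JT JF -> IFP_fixpoint K JT JF ->
     subset IT JT /\ subset IF JF).

(* positive ground programs: sets of rules h <- body *)
Definition pprog := gatom -> list gatom -> Prop.

Definition Rop (Pp : pprog) (S : aset) : aset := fun h =>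
  exists body, Pp h body /\ forall b, In b body -> S b.
Definition Dop (K : kb) (S : aset) : aset := fun a => KA K a /\ entails K S a.
Definition Top (K : kb) (Pp : pprog) (S : aset) : aset := fun a =>
  Rop Pp S a \/ Dop K S a.

Definition reduct (K : kb) (S : aset) : pprog := fun h body =>
  exists g, is_ground_rule K g /\ ghead g = h /\ gpos g = body /\
    (forall b, In b (gneg g) -> ~ S b).
Definition reduct2 (K : kb) (S : aset) : pprog := fun h body =>
  exists g, is_ground_rule K g /\ ghead g = h /\ gpos g = body /\
    (forall b, In b (gneg g) -> ~ S b) /\ ~ entails_neg K S h.

Definition Gamma (K : kb) (S : aset) : aset := lfp_in (KA K) (Top K (reduct K S)).
Definition Gamma' (K : kb) (S : aset) : aset := lfp_in (KA K) (Top K (reduct2 K S)).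

Fixpoint PN (K : kb) (n : nat) : aset * aset :=
  match n with
  | O => (fun _ => False, KA K)
  | S n' => (Gamma K (snd (PN K n')), Gamma' K (fst (PN K n')))
  end.

Definition Pomega (K : kb) : aset := fun a => exists n, fst (PN K n) a.
Definition Nomega (K : kb) : aset := fun a => forall n, snd (PN K n) a.

End HybridKB.

(* Main.v *)
Require Import Defs.
From Stdlib Require Import List Classical Arith Lia.
Import ListNotations.

Lemma lfp_sub {C P : Type} (U : @gatom C P -> Prop) f : subset (lfp_in U f) U.
Proof. intros a [H _]; exact H. Qed.

Lemma lfp_least {C P : Type} (U : @gatom C P -> Prop) f X :
  subset X U -> subset (f X) X -> subset (lfp_in U f) X.
Proof. intros H1 H2 a [_ Ha]. apply Ha; auto. Qed.

Lemma lfp_mono_op {C P : Type} (U : @gatom C P -> Prop) f g :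
  (forall X, subset X U -> subset (f X) (g X)) -> subset (lfp_in U f) (lfp_in U g).
Proof.
  intros H a [Hu Ha]. split; auto. intros X HX HgX. apply Ha; auto.
  intros b Hb. apply HgX. apply H; auto.
Qed.

Lemma lfp_pre {C P : Type} (U : @gatom C P -> Prop) f :
  (forall X Y, subset X Y -> subset (f X) (f Y)) -> (forall X, subset (f X) U) ->
  subset (f (lfp_in U f)) (lfp_in U f).
Proof.
  intros Hm HU a Ha. split. apply (HU _ _ Ha).
  intros X HX HfX. apply HfX. eapply Hm; [|exact Ha].
  apply lfp_least; auto.
Qed.


Lemma head_KA {V C P : Type} (K : @kb V C P) g : is_ground_rule K g -> KA K (ghead g).
Proof. intros H. exists g. split; auto. left; auto. Qed.

Lemma gpos_KA {V C P : Type} (K : @kb V C P) g b :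
  is_ground_rule K g -> In b (gpos g) -> KA K b.
Proof. intros H Hb. exists g. split; auto. right. apply in_or_app; auto. Qed.

Lemma gneg_KA {V C P : Type} (K : @kb V C P) g b :
  is_ground_rule K g -> In b (gneg g) -> KA K b.
Proof. intros H Hb. exists g. split; auto. right. apply in_or_app; auto. Qed.

Lemma entails_mono {V C P : Type} (K : @kb V C P) X Y a :
  subset X Y -> entails K X a -> entails K Y a.
Proof. intros H He I [Ho Hs]. apply He. split; auto. Qed.

Lemma entails_neg_mono {V C P : Type} (K : @kb V C P) X Y a :
  subset X Y -> entails_neg K X a -> entails_neg K Y a.
Proof. intros H He I [Ho Hs]. apply He. split; auto. Qed.

Lemma Top_mono {V C P : Type} (K : @kb V C P) Pp X Y :
  subset X Y -> subset (Top K Pp X) (Top K Pp Y).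
Proof.
  intros H a [[body [Hp Hb]]|[Hk He]].
  - left. exists body. split; auto.
  - right. split; auto. eapply entails_mono; eauto.
Qed.

Lemma Top_op_mono {V C P : Type} (K : @kb V C P) (Pp Pp' : pprog) X :
  (forall h b, Pp h b -> Pp' h b) -> subset (Top K Pp X) (Top K Pp' X).
Proof.
  intros H a [[body [Hp Hb]]|Hd].
  - left. exists body. split; auto.
  - right; auto.
Qed.

Lemma Top_KA {V C P : Type} (K : @kb V C P) (Pp : pprog) X :
  (forall h b, Pp h b -> KA K h) -> subset (Top K Pp X) (KA K).
Proof. intros H a [[body [Hp _]]|[Hk _]]; eauto. Qed.

Lemma reduct_KA {V C P : Type} (K : @kb V C P) Q h b : reduct K Q h b -> KA K h.
Proof. intros [g [Hg [Hh _]]]. subst. apply head_KA; auto. Qed.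

Lemma reduct2_KA {V C P : Type} (K : @kb V C P) Q h b : reduct2 K Q h b -> KA K h.
Proof. intros [g [Hg [Hh _]]]. subst. apply head_KA; auto. Qed.

Lemma Gamma_pre {V C P : Type} (K : @kb V C P) Q :
  subset (Top K (reduct K Q) (Gamma K Q)) (Gamma K Q).
Proof.
  apply lfp_pre. intros X Y; apply Top_mono.
  intros X; apply Top_KA; apply reduct_KA.
Qed.

Lemma Gamma'_pre {V C P : Type} (K : @kb V C P) Q :
  subset (Top K (reduct2 K Q) (Gamma' K Q)) (Gamma' K Q).
Proof.
  apply lfp_pre. intros X Y; apply Top_mono.
  intros X; apply Top_KA; apply reduct2_KA.
Qed.

Lemma Gamma_anti {V C P : Type} (K : @kb V C P) Q Q' :
  subset Q Q' -> subset (Gamma K Q') (Gamma K Q).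
Proof.
  intros HQ. apply lfp_mono_op. intros X _. apply Top_op_mono.
  intros h b [g [Hg [Hh [Hb Hn]]]]. exists g. repeat split; auto.
  intros c Hc HS. apply (Hn c Hc). apply HQ; auto.
Qed.

Lemma Gamma'_anti {V C P : Type} (K : @kb V C P) Q Q' :
  subset Q Q' -> subset (Gamma' K Q') (Gamma' K Q).
Proof.
  intros HQ. apply lfp_mono_op. intros X _. apply Top_op_mono.
  intros h b [g [Hg [Hh [Hb [Hn Hne]]]]]. exists g. repeat split; auto.
  - intros c Hc HS. apply (Hn c Hc). apply HQ; auto.
  - intros He. apply Hne. eapply entails_neg_mono; eauto.
Qed.

Lemma PN_mono {V C P : Type} (K : @kb V C P) n :
  subset (fst (PN K n)) (fst (PN K (S n))) /\ subset (snd (PN K (S n))) (snd (PN K n)).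
Proof.
  induction n as [|n [IH1 IH2]]; simpl.
  - split; [intros a []| apply lfp_sub].
  - split; [apply Gamma_anti; exact IH2 | apply Gamma'_anti; exact IH1].
Qed.

Lemma PN_mono_le {V C P : Type} (K : @kb V C P) n m : n <= m ->
  subset (fst (PN K n)) (fst (PN K m)) /\ subset (snd (PN K m)) (snd (PN K n)).
Proof.
  induction 1 as [|m Hle [IH1 IH2]].
  - split; intros a H; exact H.
  - destruct (PN_mono K m) as [A B]. split; intros a H; auto.
Qed.

Lemma PN_fst_KA {V C P : Type} (K : @kb V C P) n : subset (fst (PN K n)) (KA K).
Proof. destruct n; simpl; [intros a []| apply lfp_sub]. Qed.

Lemma PN_snd_KA {V C P : Type} (K : @kb V C P) n : subset (snd (PN K n)) (KA K).
Proof. destruct n; simpl; [intros a H; exact H| apply lfp_sub]. Qed.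

Lemma stab_inc {A : Type} (L : list A) : forall X : nat -> A -> Prop,
  (forall n a, X n a -> X (S n) a) -> (forall n a, X n a -> In a L \/ X 0 a) ->
  exists M, forall m a, X m a -> X M a.
Proof.
  induction L as [|c L IH]; intros X Hinc Hb.
  - exists 0. intros m a H. destruct (Hb m a H) as [[]|H']; auto.
  - assert (Hmono : forall n m a, n <= m -> X n a -> X m a).
    { intros n m a Hle; induction Hle; auto. }
    destruct (classic (exists k, X k c)) as [[k Hk]|Hn].
    + destruct (IH (fun n => X (n + k))) as [M HM].
      * intros n a H. exact (Hinc _ _ H).
      * intros n a H. destruct (Hb _ _ H) as [[Ha|Ha]|Ha].
        -- subst. right. exact Hk.
        -- left; auto.
        -- right. simpl. eapply Hmono; [|exact Ha]. lia.
      * exists (M + k). intros m a Hm. destruct (le_lt_dec k m) as [Hkm|Hkm].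
        -- replace m with ((m - k) + k) in Hm by lia. exact (HM _ _ Hm).
        -- apply (HM 0). simpl. eapply Hmono; [|exact Hm]. lia.
    + apply IH; auto. intros n a H. destruct (Hb _ _ H) as [[Ha|Ha]|Ha]; auto.
      subst. exfalso. apply Hn. eauto.
Qed.

Lemma stab_dec {A : Type} (L : list A) (Y : nat -> A -> Prop) :
  (forall n a, Y (S n) a -> Y n a) -> (forall n a, ~ Y n a -> In a L \/ ~ Y 0 a) ->
  exists M, forall m a, Y M a -> Y m a.
Proof.
  intros Hd Hb. destruct (stab_inc L (fun n a => ~ Y n a)) as [M HM].
  - intros n a H H'. apply H. auto.
  - exact Hb.
  - exists M. intros m a H. apply NNPP. intro H'. exact (HM _ _ H' H).
Qed.

Fixpoint lists_of {A : Type} (D : list A) (n : nat) : list (list A) :=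
  match n with
  | 0 => [[]]
  | S n => flat_map (fun x => map (cons x) (lists_of D n)) D
  end.

Lemma lists_of_spec {A : Type} (D : list A) : forall l,
  (forall x, In x l -> In x D) -> In l (lists_of D (length l)).
Proof.
  induction l as [|y l IH]; intros H; simpl; auto.
  apply in_flat_map. exists y. split; [apply H; left; auto|].
  apply in_map. apply IH. intros x Hx; apply H; right; auto.
Qed.

Definition KA_list {V C P : Type} (K : @kb V C P) : list (@gatom C P) :=
  flat_map (fun r => flat_map (fun b => map (mkG (apred b))
     (lists_of (kb_consts K) (length (aargs b)))) (rule_atoms r)) (kb_rules K).

Lemma KA_fin {V C P : Type} (K : @kb V C P) a : KA K a -> In a (KA_list K).
Proof.
  intros [g [[r [th [Hr [Hth Hg]]]] Hin]]. subst g.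
  assert (H : In a (map (ground_atom th) (rule_atoms r))).
  { unfold rule_atoms. simpl in *. rewrite map_app. exact Hin. }
  apply in_map_iff in H. destruct H as [b [Hab Hb]]. subst a.
  unfold KA_list. apply in_flat_map. exists r. split; auto.
  apply in_flat_map. exists b. split; auto.
  unfold ground_atom. apply in_map.
  rewrite <- (length_map (ground_term th) (aargs b)).
  apply lists_of_spec. intros x Hx. apply in_map_iff in Hx.
  destruct Hx as [t [Ht Hti]]. subst x. destruct t as [v|c]; simpl.
  - apply Hth. exists b. split; auto.
  - unfold kb_consts. apply in_or_app. right. apply in_flat_map. exists r.
    split; auto. unfold rule_consts. apply in_flat_map. exists b. split; auto.
    unfold atom_consts. apply in_flat_map. exists (TCst c). split; auto. left; auto.
Qed.

Lemma part_i {V C P : Type} (K : @kb V C P) IT IF :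
  same_set (lfp_in (KA K) (TI K IT IF)) IT ->
  subset (Gamma K (fun a => KA K a /\ ~ IF a)) IT.
Proof.
  intros Hfix a Ha. apply (proj1 (Hfix a)). revert a Ha.
  change (subset (Gamma K (fun a => KA K a /\ ~ IF a)) (lfp_in (KA K) (TI K IT IF))).
  unfold Gamma. apply lfp_mono_op.
  intros X _ b [[body [[g [Hg [Hh [Hb Hn]]]] Hbody]]|[Hk He]].
  - split. { subst. apply head_KA; auto. }
    left. exists g. split; auto. split; auto. split.
    + intros c Hc. right. apply Hbody. rewrite <- Hb; auto.
    + intros c Hc. destruct (classic (IF c)) as [H|H]; auto. exfalso.
      apply (Hn c Hc). split; auto. eapply gneg_KA; eauto.
  - split; auto. right. eapply entails_mono; [|exact He]. intros c Hc; right; auto.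
Qed.

Lemma part_ii {V C P : Type} (K : @kb V C P) IT IF :
  same_set (gfp_in (KA K) (FI K IT IF)) IF ->
  subset (fun a => KA K a /\ ~ IF a) (Gamma' K IT).
Proof.
  intros Hfix a [Hk Hn]. apply NNPP; intro HG. apply Hn. apply (proj1 (Hfix a)).
  exists (fun b => KA K b /\ ~ Gamma' K IT b). split; [intros b [H _]; auto|].
  split; [|split; auto].
  intros b [Hkb Hgb]. split; auto. split.
  - destruct (classic (entails_neg K IT b)) as [Hen|Hen]; [left; auto|right].
    intros g Hg Hh. destruct (classic (exists c, In c (gneg g) /\ IT c)) as [Hx|Hx];
      [right; auto|left].
    apply NNPP; intro Hy. apply Hgb. apply Gamma'_pre. left. exists (gpos g). split.
    + exists g. repeat split; auto. intros c Hc HIT; apply Hx; eauto.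
    + intros c Hc. apply NNPP; intro Hc'. apply Hy. exists c. split; auto.
      right. split; auto. eapply gpos_KA; eauto.
  - intro He. apply Hgb. apply Gamma'_pre. right. split; auto.
    eapply entails_mono; [|exact He]. intros c [Hkc Hc]. apply NNPP; intro H.
    apply Hc. right. split; auto.
Qed.

Lemma conv {V C P : Type} (K : @kb V C P) Pw Nw :
  same_set (Gamma K Nw) Pw -> same_set (Gamma' K Pw) Nw -> subset Pw Nw ->
  is_3interp K Pw (fun a => KA K a /\ ~ Nw a) /\
  IFP_fixpoint K Pw (fun a => KA K a /\ ~ Nw a).
Proof.
  intros H1 H2 Hsub.
  assert (PwKA : subset Pw (KA K)). { intros a Ha. apply (proj2 (H1 a)) in Ha. exact (proj1 Ha). }
  assert (NwKA : subset Nw (KA K)). { intros a Ha. apply (proj2 (H2 a)) in Ha. exact (proj1 Ha). }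
  assert (PwPre : subset (Top K (reduct K Nw) Pw) Pw).
  { intros a HT. apply (proj1 (H1 a)). apply Gamma_pre. eapply Top_mono; [|exact HT].
    intros b Hb. apply (proj2 (H1 b)); auto. }
  assert (NwPre : subset (Top K (reduct2 K Pw) Nw) Nw).
  { intros a HT. apply (proj1 (H2 a)). apply Gamma'_pre. eapply Top_mono; [|exact HT].
    intros b Hb. apply (proj2 (H2 b)); auto. }
  split.
  { split; [exact PwKA|]. split; [intros a H; exact (proj1 H)|].
    intros a [Hp [_ Hn]]. apply Hn. apply Hsub; auto. }
  unfold IFP_fixpoint, IFP; simpl. split.
  - intro a; split.
    + intros Hl. apply (lfp_least (KA K) (TI K Pw (fun a => KA K a /\ ~ Nw a)) Pw PwKA); [|exact Hl].
      intros b [Hkb [[g [Hg [Hh [Hpos Hneg]]]]|He]].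
      * apply PwPre. left. exists (gpos g). split.
        -- exists g. repeat split; auto. intros c Hc HN.
           destruct (Hneg c Hc) as [_ Hc']; auto.
        -- intros c Hc; destruct (Hpos c Hc); auto.
      * apply PwPre. right. split; auto. eapply entails_mono; [|exact He].
        intros c [Hc|Hc]; auto.
    + intros Hp. apply (proj2 (H1 a)) in Hp. revert a Hp.
      change (subset (Gamma K Nw) (lfp_in (KA K) (TI K Pw (fun a => KA K a /\ ~ Nw a)))).
      unfold Gamma. apply lfp_mono_op.
      intros X _ b [[body [[g [Hg [Hh [Hb Hn]]]] Hbody]]|[Hk He]].
      * split. { subst. apply head_KA; auto. }
        left. exists g. split; [exact Hg|]. split; [exact Hh|]. split.
        -- intros c Hc; right; apply Hbody; rewrite <- Hb; auto.
        -- intros c Hc; split; [eapply gneg_KA; eauto| apply Hn; auto].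
      * split; auto. right. eapply entails_mono; [|exact He]. intros c Hc; right; auto.
  - intro a; split.
    + intros [X [HXK [HXF HXa]]]. split; [apply HXK; auto|]. intro HNa.
      assert (Hs : subset Nw (fun b => Nw b /\ ~ X b)).
      { intros b Hb. apply (proj2 (H2 b)) in Hb. revert b Hb.
        change (subset (Gamma' K Pw) (fun b => Nw b /\ ~ X b)).
        unfold Gamma'. apply lfp_least.
        { intros b [Hb _]; apply NwKA; auto. }
        intros b HT. split.
        { apply NwPre. eapply Top_mono; [|exact HT]. intros c [Hc _]; auto. }
        intro HXb. destruct (HXF b HXb) as [_ [Hrules Hnent]].
        destruct HT as [[body [[g [Hg [Hh [Hbody [Hn Hne]]]]] Hall]]|[_ He]].
        - destruct Hrules as [Hen|Hr]; [contradiction|].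
          destruct (Hr g Hg Hh) as [[c [Hc [Hc1|Hc2]]]|[c [Hc Hc']]].
          + rewrite Hbody in Hc. destruct (Hall c Hc) as [HNc _].
            destruct Hc1 as [_ Hc1]; auto.
          + rewrite Hbody in Hc. destruct (Hall c Hc) as [_ HXc]; auto.
          + apply (Hn c Hc); auto.
        - apply Hnent. eapply entails_mono; [|exact He].
          intros c [HNc HXc]. split; [apply NwKA; auto|].
          intros [[_ Hc]|Hc]; auto. }
      destruct (Hs a HNa); auto.
    + intros [Hk Hn]. exists (fun b => KA K b /\ ~ Nw b).
      split; [intros b [H _]; auto|]. split; [|split; auto].
      intros b [Hkb Hnb]. split; auto. split.
      * destruct (classic (entails_neg K Pw b)) as [Hen|Hen]; [left; auto|right].
        intros g Hg Hh.
        destruct (classic (exists c, In c (gneg g) /\ Pw c)) as [Hx|Hx]; [right; auto|left].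
        apply NNPP; intro Hy. apply Hnb. apply NwPre. left. exists (gpos g). split.
        -- exists g. repeat split; auto. intros c Hc HP; apply Hx; eauto.
        -- intros c Hc; apply NNPP; intro Hc'; apply Hy; exists c; split; auto.
           left; split; auto. eapply gpos_KA; eauto.
      * intro He. apply Hnb. apply NwPre. right. split; auto.
        eapply entails_mono; [|exact He]. intros c [Hkc Hc]. apply NNPP; intro.
        apply Hc. left. split; auto.
Qed.

Theorem theorem1 (V C P : Type) (K : @kb V C P) (IT IF : @gatom C P -> Prop) :
  dl_safe K ->
  is_lfp_IFP K IT IF ->
  (forall a, IT a <-> Pomega K a) /\
  (forall a, (KA K a /\ ~ IF a) <-> Nomega K a).
Proof.
  intros _ [H3 [[HfT HfF] Hleast]].
  unfold IFP in HfT, HfF; simpl in HfT, HfF.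
  assert (Hn : forall n, subset (fst (PN K n)) IT /\
                 subset (fun a => KA K a /\ ~ IF a) (snd (PN K n))).
  { induction n as [|n [A B]]; simpl.
    - split; [intros a []| intros a [H _]; auto].
    - split.
      + intros a Ha. apply (part_i K IT IF HfT). eapply Gamma_anti; [exact B| exact Ha].
      + intros a Ha. eapply Gamma'_anti; [exact A|]. apply (part_ii K IT IF HfF); auto. }
  destruct (stab_inc (KA_list K) (fun n => fst (PN K n))) as [M1 HM1].
  { intros n a H. apply (PN_mono K n); auto. }
  { intros n a H. left. apply KA_fin. eapply PN_fst_KA; eauto. }
  destruct (stab_dec (KA_list K) (fun n => snd (PN K n))) as [M2 HM2].
  { intros n a H. apply (PN_mono K n); auto. }
  { intros n a H. destruct (classic (KA K a)) as [Hk|Hk].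
    - left. apply KA_fin; auto.
    - right. exact Hk. }
  set (M := M1 + M2).
  assert (HPM : forall m, subset (fst (PN K m)) (fst (PN K M))).
  { intros m a Ha. apply (PN_mono_le K M1 M); [unfold M; lia|]. eapply HM1; eauto. }
  assert (HNM : forall m, subset (snd (PN K M)) (snd (PN K m))).
  { intros m a Ha. apply (HM2 m). apply (PN_mono_le K M2 M); [unfold M; lia|]. auto. }
  assert (H1 : same_set (Gamma K (Nomega K)) (Pomega K)).
  { intro a; split.
    - intros Ha. exists (S M). simpl. eapply Gamma_anti; [|exact Ha].
      intros b Hb m. apply HNM; auto.
    - intros [n Hn']. apply (PN_mono K n) in Hn'. simpl in Hn'.
      eapply Gamma_anti; [|exact Hn']. intros b Hb; apply Hb. }
  assert (H2 : same_set (Gamma' K (Pomega K)) (Nomega K)).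
  { intro a; split.
    - intros Ha n. destruct n as [|n]; simpl.
      + exact (proj1 Ha).
      + eapply Gamma'_anti; [|exact Ha]. intros b Hb; exists n; auto.
    - intros Ha. specialize (Ha (S M)). simpl in Ha. eapply Gamma'_anti; [|exact Ha].
      intros b [n Hb]. eapply HPM; eauto. }
  assert (Hsub : subset (Pomega K) (Nomega K)).
  { intros a [n Ha] m. apply (proj2 (Hn m)). apply (proj1 (Hn n)) in Ha.
    destruct H3 as [HIT [_ Hd]]. split; [apply HIT; auto|]. intro HIF.
    apply (Hd a); auto. }
  destruct (conv K _ _ H1 H2 Hsub) as [H3' Hfix'].
  destruct (Hleast _ _ H3' Hfix') as [L1 L2].
  split.
  - intro a; split; [apply L1|]. intros [n Ha]. apply (proj1 (Hn n)); auto.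
  - intro a; split.
    + intros Ha n. apply (proj2 (Hn n)); auto.
    + intros HN. split; [exact (HN 0)|]. intro HIF. destruct (L2 a HIF) as [_ H]; auto.
Qed.
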